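(* Let $d\ge 2$ and let $\mathcal F$ be an affine invariant control family of globally Lipschitz maps $\mathbb R^d\to\mathbb R^d$. Then the control system with control family $\mathcal F$ possesses the exact universal interpolation property if and only if there exists $f=(f_1,\dots,f_d)\in\mathcal F$ such that at least one component $f_j:\mathbb R^d\to\mathbb R$ is non-linear, i.e. not of the form $x\mapsto a^\top x+c$ with $a\in\mathbb R^d$, $c\in\mathbb R$.
   Context: A control family is a set $\mathcal F$ of globally Lipschitz maps $\mathbb R^d\to\mathbb R^d$ (the right-hand sides $x\mapsto f(x;\theta)$, $\theta\in\Theta$, of the control system $\dot x=f(x;\theta(t))$ with piecewise constant controls). For $g\in\mathcal F$ and $t\ge0$, $\varphi^g_t$ denotes the time-$t$ flow map $x_0\mapsto x(t)$ of $\dot x=g(x)$, $x(0)=x_0$. Let $\Phi(\mathcal F,T)$ be the set of maps $\varphi^{f_k}_{t_k}\circ\cdots\circ\varphi^{f_1}_{t_1}$ with $k\ge1$, $f_1,\dots,f_k\in\mathcal F$, $t_i\ge0$, $t_1+\cdots+t_k=T$; set $\mathcal A_{\mathcal F,T}=\bigcup_{0\le t\le T}\Phi(\mathcal F,t)$ and $\mathcal A_{\mathcal F}=\bigcup_{T\ge0}\mathcal A_{\mathcal F,T}$ (the attainable set). $\mathcal F$ is affine invariant if $f\in\mathcal F$ implies $x\mapsto Wf(Ax-b)$ belongs to $\mathcal F$ for all $W,A\in\mathbb R^{d\times d}$, $b\in\mathbb R^d$. The system has the exact universal interpolation property if for every positive integer $N$ and every data $(x_1,y_1),\dots,(x_N,y_N)$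 in $\mathbb R^d\times\mathbb R^d$ with $x_i\ne x_j$ and $y_i\ne y_j$ for $i\ne j$, there is $\varphi\in\mathcal A_{\mathcal F}$ with $\varphi(x_i)=y_i$ for all $i$. *)

(* Defs.v *)
From HB Require Import structures.
From mathcomp Require Import all_boot all_order all_algebra.
From mathcomp Require Import all_classical all_reals all_analysis.
Set Implicit Arguments. Unset Strict Implicit. Unset Printing Implicit Defensive.
Import Order.TTheory GRing.Theory Num.Theory.
Import numFieldNormedType.Exports.
Local Open Scope classical_set_scope.
Local Open Scope ring_scope.

Section Control.
Variables (R : realType) (d : nat).
Notation vec := 'cV[R]_d.

(* global Lipschitz continuity (w.r.t. the max norm on R^d; all norms on R^d are equivalent) *)
Definition globally_lipschitz (g : vec -> vec) : Prop :=
  exists k : R, forall x y : vec, `|g x - g y| <= k * `|x - y|.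

(* For globally
   Lipschitz g the solution exists and is unique, so this relation is the
   graph of the flow map phi^g_t. *)
Definition is_flow (g : vec -> vec) (t : R) (x0 y : vec) : Prop :=
  exists x : R -> vec,
    x 0 = x0 /\ x t = y /\ forall s : R, is_derive s 1 x (g (x s)).

Fixpoint comp_flow (s : seq ((vec -> vec) * R)) (x y : vec) : Prop :=
  match s with
  | [::] => x = y
  | (g, t) :: s' => exists z, is_flow g t x z /\ comp_flow s' z y
  end.

Definition affine_invariant (F : set (vec -> vec)) : Prop :=
  forall f, F f -> forall (W A : 'M[R]_d) (b : vec),
    F (fun x => W *m f (A *m x - b)).

Definition exact_universal_interpolation (F : set (vec -> vec)) : Prop :=
  forall (N : nat), (0 < N)%N ->
  forall (xs ys : 'I_N -> vec), injective xs -> injective ys ->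
  exists s : seq ((vec -> vec) * R),
    s <> [::] /\ (forall p, p \in s -> F p.1 /\ 0 <= p.2) /\
    forall i, comp_flow s (xs i) (ys i).

Definition component_affine (f : vec -> vec) (j : 'I_d) : Prop :=
  exists (a : vec) (c : R), forall x : vec, f x j 0 = (a^T *m x) 0 0 + c.

End Control.

(* Main.v *)
Require Import Defs.
From HB Require Import structures.
From mathcomp Require Import all_boot all_order all_algebra.
From mathcomp Require Import all_classical all_reals all_analysis.
From mathcomp Require Import ring lra.
Import Order.TTheory GRing.Theory Num.Theory.
Import numFieldNormedType.Exports.
Local Open Scope classical_set_scope.
Local Open Scope ring_scope.

Section Anti.
Variable R : realType.
Local Notation mu := (@lebesgue_measure R).

Definition Fint (h : R -> R) (a x : R) := \int[mu]_(t in `[a, x]) h t.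

Lemma integ_seg (h : R -> R) a b : continuous h ->
  mu.-integrable `[a, b] (EFin \o h).
Proof.
move=> ch; apply: continuous_compact_integrable; first exact: segment_compact.
by apply: continuous_subspaceT => x; exact: ch.
Qed.

Lemma Fint_split (h : R -> R) a b x : continuous h -> a <= b -> b <= x ->
  Fint h a x = Fint h a b + Fint h b x.
Proof.
move=> ch ab bx; rewrite /Fint.
have := @Rintegral_itvB R h (BLeft a) (BRight x) b (integ_seg h a x ch).
rewrite !bnd_simp => /(_ ab bx) E.
rewrite -(@Rintegral_itv_obnd_cbnd R b (BRight x) h); last first.
  apply: integrableS (integ_seg h b x ch) => //=.
  by apply: subset_itvr; rewrite bnd_simp.
by rewrite -E addrC subrK.
Qed.

Lemma antideriv (h : R -> R) : continuous h ->
  exists H : R -> R, forall x : R, is_derive x (1:R) H (h x).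
Proof.
move=> ch.
pose H x := Fint h (- (`|x| + 1)) x - Fint h (- (`|x| + 1)) 0.
have key : forall a x, a <= Num.min x 0 -> Fint h a x - Fint h a 0 =
    Fint h (Num.min x 0) x - Fint h (Num.min x 0) 0.
  move=> a x am.
  rewrite (@Fint_split h a (Num.min x 0) x) //; last by rewrite ge_min lexx.
  rewrite (@Fint_split h a (Num.min x 0) 0) //; last by rewrite ge_min lexx orbT.
  by ring.
have Hk : forall a x, a <= Num.min x 0 -> H x = Fint h a x - Fint h a 0.
  move=> a x am; rewrite /H key; last first.
    have := ler_norm x; have := ler_norm (- x); rewrite normrN => h1 h2.
    rewrite le_min; apply/andP; split; lra.
  by rewrite (key a x am).
exists H => x.
pose a0 := - (`|x| + 2).
have a0x : a0 < x.
  by have := ler_norm (- x); rewrite normrN /a0; lra.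
have [d1 d2] := @continuous_FTC1_closed R h a0 x (x + 1) (ltr_pwDr ltr01 (lexx x))
  (integ_seg h a0 (x + 1) ch) a0x (ch x).
have D1 : is_derive x (1:R) (Fint h a0) (h x).
  by apply: DeriveDef; [exact: d1| rewrite -derive1E].
have D2 : is_derive x (1:R) (fun y => Fint h a0 y - Fint h a0 0) (h x - 0).
  by apply: is_deriveB.
rewrite subr0 in D2.
apply: near_eq_is_derive D2.
apply/nbhs_ballP; exists 1 => //= y; rewrite /ball /= => xy.
rewrite (Hk a0 y) //.
have := ler_norm (x - y); have := ler_norm (- (x - y)); rewrite normrN.
have := ler_norm x; have := ler_norm (- x); rewrite normrN /a0.
move=> *; rewrite le_min; apply/andP; split; lra.
Qed.
End Anti.
Arguments antideriv {R h}.

Section Core.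
Variable R : realType.

Fixpoint Dl (ds : seq R) (f : R -> R) (t : R) : R :=
  match ds with
  | [::] => f t
  | e :: ds' => Dl ds' f (t + e) - Dl ds' f t
  end.

Lemma Dl_ext ds f g t : (forall x, f x = g x) -> Dl ds f t = Dl ds g t.
Proof. by move=> fg; elim: ds t => [|e ds IH] t /=; rewrite ?fg ?IH. Qed.

Lemma Dl_scale ds c f t : Dl ds (fun x => c * f x) t = c * Dl ds f t.
Proof. by elim: ds t => //= e ds IH t; rewrite !IH mulrBr. Qed.

Lemma Dl_sum (I : Type) ds (L : seq I) (F : I -> R -> R) t :
  Dl ds (fun x => \sum_(i <- L) F i x) t = \sum_(i <- L) Dl ds (F i) t.
Proof. by elim: ds t => //= e ds IH t; rewrite !IH -sumrB. Qed.

Lemma is_derive_ext (f g : R -> R) x df :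
  (forall y, f y = g y) -> is_derive x (1:R) f df -> is_derive x (1:R) g df.
Proof. by move=> fg; have -> : g = f by apply/funext => y; rewrite fg. Qed.
Arguments is_derive_ext [f g x df].

Lemma deriv_scale (c : R) (f : R -> R) x df :
  is_derive x (1:R) f df -> is_derive x (1:R) (fun y => c * f y) (c * df).
Proof. by move=> D; exact: is_deriveZ. Qed.
Arguments deriv_scale c [f x df].

Lemma is_derive_lin (t s u : R) : is_derive u (1:R) (fun v => t + s * v) s.
Proof.
have := is_deriveD (is_derive_cst t u (1:R)) (deriv_scale s (is_derive_id u (1:R))).
by rewrite add0r mulr1.
Qed.

Lemma comp_lin (F : R -> R) (t s u : R) a : is_derive (t + s * u) (1:R) F a ->
  is_derive u (1:R) (fun v => F (t + s * v)) (a * s).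
Proof. move=> D; exact: (@is_derive1_comp R F (fun v => t + s * v) u a s D (is_derive_lin t s u)). Qed.
Arguments comp_lin [F t s u a].

Lemma deriv_zero (G : R -> R) u D :
  (forall v, G v = 0) -> is_derive u (1:R) G D -> D = 0.
Proof.
move=> G0 dG; rewrite -(@derive_val _ _ _ _ _ _ _ dG).
have -> : G = cst 0 by apply/funext => v; rewrite G0.
exact: derive_cst.
Qed.

Lemma Dl_derive_t ds (f f' : R -> R) :
  (forall x, is_derive x (1:R) f (f' x)) ->
  forall t, is_derive t (1:R) (Dl ds f) (Dl ds f' t).
Proof.
move=> D; elim: ds => [|e ds IH] t /=; first exact: D.
have D1 : is_derive t (1:R) (fun y => Dl ds f (y + e)) (Dl ds f' (t + e)).
  have := comp_lin (IH (e + 1 * t)).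
  rewrite mulr1 mul1r addrC; apply: is_derive_ext => y /=; by rewrite mul1r addrC.
by have := is_deriveB D1 (IH t); apply: is_derive_ext.
Qed.

Lemma Dl_derive_u ds (G : R -> R -> R) (G' : R -> R) u :
  (forall x, is_derive u (1:R) (G x) (G' x)) ->
  forall t, is_derive u (1:R) (fun v => Dl ds (fun x => G x v) t) (Dl ds G' t).
Proof.
move=> D; elim: ds => [|e ds IH] t /=; first exact: D.
by have := is_deriveB (IH (t + e)) (IH t); apply: is_derive_ext.
Qed.

Section Rel.
Variables (h H : R -> R) (L : seq R) (w : R -> R).
Hypothesis HH : forall x, is_derive x (1:R) H (h x).
Hypothesis rel : forall t u, \sum_(x <- L) w x * h (t + x * u) = 0.

Definition Phi k u t := \sum_(x <- L) (w x * x ^+ k) * h (t + x * u).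
Definition Psi k u t := \sum_(x <- L) (w x * x ^+ k) * H (t + x * u).

Lemma sum_derive (M : seq R) (F F' : R -> R -> R) x :
  (forall p, is_derive x (1:R) (F p) (F' p x)) ->
  is_derive x (1:R) (fun y => \sum_(p <- M) F p y) (\sum_(p <- M) F' p x).
Proof.
move=> D; elim: M => [|p M IH].
  rewrite big_nil; apply: is_derive_ext (is_derive_cst 0 x (1:R)) => y.
  by rewrite big_nil.
rewrite big_cons; apply: is_derive_ext (is_deriveD (D p) IH) => y.
by rewrite big_cons.
Qed.

Lemma Psi_dt k u t : is_derive t (1:R) (Psi k u) (Phi k u t).
Proof.
apply: (@sum_derive L (fun p y => (w p * p ^+ k) * H (y + p * u))
  (fun p y => (w p * p ^+ k) * h (y + p * u))) => p.
apply: deriv_scale.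
have := comp_lin (HH (p * u + 1 * t)).
rewrite mulr1 mul1r addrC; apply: is_derive_ext => y /=; by rewrite mul1r addrC.
Qed.

Lemma Psi_du k u t : is_derive u (1:R) (fun v => Psi k v t) (Phi k.+1 u t).
Proof.
have := (@sum_derive L (fun p v => (w p * p ^+ k) * H (t + p * v))
  (fun p v => (w p * p ^+ k.+1) * h (t + p * v)) u).
apply => p.
have -> : w p * p ^+ k.+1 * h (t + p * u) =
  w p * p ^+ k * (h (t + p * u) * p) by rewrite exprSr; ring.
exact: deriv_scale (comp_lin (HH _)).
Qed.

Lemma step k : (forall ds, size ds = k -> forall t u, Dl ds (Phi k u) t = 0) ->
  forall ds, size ds = k.+1 -> forall t u, Dl ds (Phi k.+1 u) t = 0.
Proof.
move=> Pk [|d ds'] //= /eqP; rewrite eqSS => /eqP sz t u.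
have cst_u : forall v, Dl ds' (Psi k v) (t + d) - Dl ds' (Psi k v) t = 0.
  move=> v; apply/eqP; rewrite subr_eq0; apply/eqP.
  apply: is_derive_0_is_cst => x.
  have := @Dl_derive_t ds' (Psi k v) (Phi k v) (fun x => Psi_dt k v x) x.
  by rewrite (Pk ds' sz x v).
have D := is_deriveB
  (@Dl_derive_u ds' (fun x v => Psi k v x) (fun x => Phi k.+1 u x) u
     (fun x => Psi_du k u x) (t + d))
  (@Dl_derive_u ds' (fun x v => Psi k v x) (fun x => Phi k.+1 u x) u
     (fun x => Psi_du k u x) t).
exact: (@deriv_zero _ u _ (fun v => cst_u v) D).
Qed.

Lemma allPk k : forall ds, size ds = k -> forall t u, Dl ds (Phi k u) t = 0.
Proof.
elim: k => [|k IH]; last exact: step.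
case=> // _ t u /=; rewrite /Phi.
under eq_bigr do rewrite expr0 mulr1.
exact: rel.
Qed.

Lemma moment_conseq k : \sum_(x <- L) w x * x ^+ k != 0 ->
  forall ds, size ds = k -> forall t, Dl ds h t = 0.
Proof.
move=> nz ds sz t; have := @allPk k ds sz t 0.
rewrite (@Dl_ext ds _ (fun y => (\sum_(x <- L) w x * x ^+ k) * h y)).
  by rewrite Dl_scale => /eqP; rewrite mulf_eq0 (negbTE nz) /= => /eqP.
by move=> y; rewrite /Phi mulr_suml; apply: eq_bigr => x _; rewrite mulr0 addr0.
Qed.
End Rel.
End Core.
Arguments Dl {R}.
Arguments moment_conseq {R h H L w}.
Arguments is_derive_lin {R}.
Arguments is_derive_ext {R f g x df}.
Arguments deriv_scale {R} c {f x df}.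
Arguments comp_lin {R F t s u a}.
Arguments deriv_zero {R G u D}.

Section Lip.
Variable R : realType.

Lemma small0 (y B : R) : (forall n : nat, n%:R * `|y| <= B) -> y = 0.
Proof.
move=> H; apply/eqP; apply/negPn/negP => ny.
have yp : 0 < `|y| by rewrite normr_gt0.
have := truncnS_gt (B / `|y|); rewrite ltr_pdivrMr // => /lt_le_trans /(_ (H _)).
by rewrite ltxx.
Qed.

Variables (h : R -> R) (Lc : R).
Hypothesis hL : forall x y, `|h x - h y| <= Lc * `|x - y|.

Lemma Lc_ge0 : 0 <= Lc.
Proof. by have := hL 1 0; rewrite subr0 normr1 mulr1; apply: le_trans. Qed.

Lemma Dl_bound ds : forall e, exists B, forall t, `|Dl (e :: ds) h t| <= B.
Proof.
elim: ds => [|e' ds IH] e.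
  exists (Lc * `|e|) => t /=; apply: le_trans (hL _ _) _.
  by have -> : t + e - t = e by ring.
have [B hB] := IH e'; exists (B + B) => t.
apply: le_trans (ler_normB (Dl (e' :: ds) h (t + e)) (Dl (e' :: ds) h t)) _.
exact: lerD.
Qed.

Lemma Qup k : (forall ds, size ds = k -> forall t, Dl ds h t = 0) ->
  forall ds, size ds = k.+1 -> forall t, Dl ds h t = 0.
Proof.
move=> Q [|e ds] //= /eqP; rewrite eqSS => /eqP sz t.
by rewrite !Q // subrr.
Qed.

Lemma Qdown k : (2 <= k)%N ->
  (forall ds, size ds = k.+1 -> forall t, Dl ds h t = 0) ->
  forall ds, size ds = k -> forall t, Dl ds h t = 0.
Proof.
move=> k2 Qk ds sz t; case: ds sz => [|e [|e' ds'']] sz; try by rewrite -sz in k2.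
pose w := Dl (e' :: ds'') h.
pose g := Dl (e :: e' :: ds'') h.
have gc : forall x, g x = g 0.
  move=> x; apply/eqP; rewrite -subr_eq0; apply/eqP.
  have H0 : size (x :: e :: e' :: ds'') = k.+1 by rewrite /= -sz.
  have := Qk _ H0 0.
  by rewrite [Dl (x :: _) _ _]/= add0r.
have wm : forall m : nat, w (m%:R * e) = w 0 + m%:R * g 0.
  elim=> [|m IH]; first by rewrite !mul0r addr0.
  have E : g (m%:R * e) = w (m%:R * e + e) - w (m%:R * e) by [].
  rewrite (gc (m%:R * e)) in E.
  have -> : m.+1%:R * e = m%:R * e + e by rewrite mulrSr mulrDl mul1r.
  have E2 : w (m%:R * e + e) = w (m%:R * e) + g 0 by rewrite E; ring.
  by rewrite E2 IH mulrSr; ring.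
have [B hB] := Dl_bound ds'' e'.
suff g00 : g 0 = 0 by rewrite -g00; exact: gc t.
apply: (@small0 _ (B + B)) => n.
have E : n%:R * g 0 = w (n%:R * e) - w 0 by rewrite wm; ring.
rewrite -(normr_nat R n) -normrM E; apply: le_trans (ler_normB _ _) _.
exact: lerD.
Qed.

Lemma Q2_affine : (forall a b t, Dl [:: a; b] h t = 0) ->
  forall x, h x = h 0 + x * (h 1 - h 0).
Proof.
move=> Q2.
pose g x := h x - h 0 - x * (h 1 - h 0).
have add : forall a b, g (a + b) = g a + g b.
  move=> a b; have := Q2 a b 0; rewrite /= !add0r /g => /eqP.
  move=> /eqP E.
  have : h (a + b) = h a + h b - h 0 by lra.
  by move=> ->; ring.
have g0 : g 0 = 0 by rewrite /g mul0r; ring.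
have g1 : g 1 = 0 by rewrite /g mul1r; ring.
pose M := Lc + `|h 1 - h 0|.
have gL : forall x y, `|g x - g y| <= M * `|x - y|.
  move=> x y; have -> : g x - g y = (h x - h y) - (x - y) * (h 1 - h 0).
    by rewrite /g; ring.
  apply: le_trans (ler_normB _ _) _; rewrite normrM mulrDl [X in _ <= _ + X]mulrC.
  exact: lerD.
have gnat : forall (n : nat) x, g (n%:R * x) = n%:R * g x.
  elim=> [|n IH] x; first by rewrite !mul0r.
  by rewrite mulrSr mulrDl mul1r add IH mulrDl mul1r.
have gN : forall x, g (- x) = - g x.
  move=> x; apply/eqP; rewrite -subr_eq0 opprK addrC -add subrr g0 //.
have gint : forall z : int, g z%:~R = 0.
  case=> n.
    have -> : (Posz n)%:~R = n%:R * 1 :> R by rewrite mulr1.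
    by rewrite gnat g1 mulr0.
  rewrite NegzE mulrNz gN.
  have -> : (Posz n.+1)%:~R = n.+1%:R * 1 :> R by rewrite mulr1.
  by rewrite gnat g1 mulr0 oppr0.
move=> x; suff gx : g x = 0.
  apply/eqP; rewrite -subr_eq0; apply/eqP.
  have -> : h x - (h 0 + x * (h 1 - h 0)) = g x by rewrite /g; ring.
  exact: gx.
apply: (@small0 _ M) => n.
rewrite -normr_nat -normrM -gnat.
pose m := Num.floor (n%:R * x).
have -> : n%:R * x = (n%:R * x - m%:~R) + m%:~R by ring.
rewrite add gint addr0 -[g _]subr0 -g0.
apply: le_trans (gL _ _) _; rewrite subr0 -[leRHS]mulr1.
apply: ler_wpM2l; first by rewrite addr_ge0 ?Lc_ge0.
have := floor_le (n%:R * x); have : (n%:R * x) < (m + 1)%:~R.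
  by rewrite -floor_lt_int ltrDl.
rewrite intrD => h1 h2.
rewrite ger0_norm; lra.
Qed.
End Lip.
Arguments small0 {R}.
Arguments Lc_ge0 {R h Lc}.
Arguments Dl_bound {R h Lc}.
Arguments Qup {R h}.
Arguments Qdown {R h Lc}.
Arguments Q2_affine {R h Lc}.

Section Line.
Variable R : realType.

Lemma lip_cont (h : R -> R) Lc : (forall x y, `|h x - h y| <= Lc * `|x - y|) ->
  continuous h.
Proof.
move=> hL x; apply/cvgrPdist_lt => e e0.
have L0 := Lc_ge0 hL.
apply/nbhs_ballP; exists (e / (Lc + 1)) => /=.
  by rewrite divr_gt0 // ltr_wpDl.
move=> y; rewrite /ball /= => xy.
have : `|x - y| * (Lc + 1) < e by rewrite -ltr_pdivlMr // ltr_wpDl.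
apply: le_lt_trans; apply: le_trans (hL x y) _.
by rewrite mulrDr mulr1 mulrC lerDl.
Qed.

Lemma moment (ss : seq R) (w : R -> R) a : uniq ss -> a \in ss -> w a != 0 ->
  exists k, \sum_(x <- ss) w x * x ^+ k != 0.
Proof.
move=> uss aS wa.
case: (pselect (exists k, \sum_(x <- ss) w x * x ^+ k != 0)) => // H; exfalso.
have allz : forall k, \sum_(x <- ss) w x * x ^+ k = 0.
  move=> k; apply/eqP; apply/negP => nz; apply: H; exists k; exact/negP.
have poly0 : forall p : {poly R}, \sum_(x <- ss) w x * p.[x] = 0.
  move=> p; under eq_bigr do rewrite horner_coef mulr_sumr.
  rewrite exchange_big /= big1 // => i _.
  under eq_bigr do rewrite mulrA [w _ * _]mulrC -mulrA.
  by rewrite -mulr_sumr allz mulr0.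
pose p := \prod_(y <- ss | y != a) ('X - y%:P).
have := poly0 p; rewrite (bigD1_seq a aS uss) /= big_seq_cond big1; last first.
  move=> x /andP[xS xa]; rewrite /p horner_prod big_mkcond (bigD1_seq x) //= xa.
  by rewrite hornerXsubC subrr mul0r mulr0.
rewrite addr0 => /eqP; rewrite mulf_eq0 (negbTE wa) /= => /eqP.
rewrite /p horner_prod => /eqP; apply/negP; rewrite prodf_seq_neq0.
apply/allP => y _; apply/implyP => ya.
by rewrite hornerXsubC subr_eq0 eq_sym.
Qed.

Lemma line_affine (h : R -> R) Lc (ss : seq R) (w : R -> R) a :
  (forall x y, `|h x - h y| <= Lc * `|x - y|) -> uniq ss -> a \in ss -> w a != 0 ->
  (forall t u, \sum_(x <- ss) w x * h (t + x * u) = 0) ->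
  forall x, h x = h 0 + x * (h 1 - h 0).
Proof.
move=> hL uss aS wa rel.
have [H HH] := antideriv (@lip_cont h Lc hL).
have [k nz] := @moment ss w a uss aS wa.
have Qk := moment_conseq HH rel k nz.
have Qm : forall m, (k <= m)%N -> forall ds, size ds = m -> forall t, Dl ds h t = 0.
  elim=> [|m IH]; first by rewrite leqn0 => /eqP k0; rewrite -k0.
  rewrite leq_eqVlt => /orP[/eqP <-|]; first exact: Qk.
  by rewrite ltnS => km; apply: Qup; exact: IH.
have Q2 : forall n, forall ds, size ds = n.+2 -> forall t, Dl ds h t = 0.
  move=> n.
  suff gen : forall d, (forall m, (n.+2 + d <= m)%N -> forall ds, size ds = m ->
      forall t, Dl ds h t = 0) -> forall ds, size ds = n.+2 -> forall t, Dl ds h t = 0.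
    apply: (gen (k - n.+2)%N) => m hm; apply: Qm.
    by apply: leq_trans hm; rewrite -leq_subLR.
  elim=> [|d IH] hyp; first by apply: hyp; rewrite addn0.
  apply: IH => m; rewrite leq_eqVlt => /orP[/eqP <-|].
    apply: (Qdown hL); first by rewrite !addSn.
    by apply: hyp; rewrite addnS.
  by rewrite -addnS; exact: hyp.
apply: Q2_affine hL _ => a0 b t; exact: (Q2 0%N).
Qed.
End Line.

Section MX.
Variable R : realType.

Lemma entry_le m n (M : 'M[R]_(m, n)) i l : `|M i l| <= `|M|.
Proof.
rewrite [leRHS]/Num.Def.normr/= mx_normrE.
by apply: le_trans; last exact: (le_bigmax _ _ (i, l)).
Qed.

Lemma is_derive_mx m n (X : R -> 'M[R]_(m, n)) s (D : 'M[R]_(m, n)) :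
  (forall i l, is_derive s (1:R) (fun t => X t i l) (D i l)) ->
  is_derive s (1:R) X D.
Proof.
move=> H; apply: DeriveDef.
  by apply/derivable_mxP => i l; have := H i l; case.
rewrite derive_mx; last by apply/derivable_mxP => i l; have := H i l; case.
by apply/matrixP => i l; rewrite mxE; exact: derive_val.
Qed.

Lemma is_derive_mx_entry m n (X : R -> 'M[R]_(m, n)) s (D : 'M[R]_(m, n)) i l :
  is_derive s (1:R) X D -> is_derive s (1:R) (fun t => X t i l) (D i l).
Proof.
move=> H; have dX : derivable X s 1 by case: H.
have := @derive_val _ _ _ _ _ _ _ H; rewrite derive_mx // => E.
apply: DeriveDef; first by move/derivable_mxP: dX; apply.
by rewrite -E mxE.
Qed.
End MX.

Section NoRel.
Variables (R : realType) (d : nat).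
Local Notation vec := 'cV[R]_d.
Variables (f : vec -> vec) (K : R) (j : 'I_d).
Hypothesis fL : forall x y, `|f x - f y| <= K * `|x - y|.

Definition Fj x := f x j 0.
Definition bas (q p : vec) (s : R) := f (s *: q - p) j 0.

Lemma Fj_lip x y : `|Fj x - Fj y| <= K * `|x - y|.
Proof.
apply: le_trans (fL x y); rewrite /Fj.
have -> : f x j 0 - f y j 0 = (f x - f y) j 0 by rewrite !mxE.
exact: entry_le.
Qed.

Lemma lineF_lip (p0 q0 : vec) x y :
  `|Fj (p0 + x *: q0) - Fj (p0 + y *: q0)| <= (K * `|q0|) * `|x - y|.
Proof.
apply: le_trans (Fj_lip _ _) _.
have -> : p0 + x *: q0 - (p0 + y *: q0) = (x - y) *: q0.
  by apply/matrixP => i l; rewrite !mxE; ring.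
by rewrite normrZ le_eqVlt; apply/orP; left; apply/eqP; ring.
Qed.

Lemma noRel : ~ component_affine f j ->
  forall (ss : seq R) (w : R -> R) a, uniq ss -> a \in ss -> w a != 0 ->
  exists q p, \sum_(s <- ss) w s * bas q p s != 0.
Proof.
move=> naff ss w a uss aS wa.
case: (pselect (exists q p, \sum_(s <- ss) w s * bas q p s != 0)) => // Hn.
exfalso; apply: naff.
have H : forall q p, \sum_(s <- ss) w s * bas q p s = 0.
  move=> q p; apply/eqP; apply/negP => nz; apply: Hn; exists q, p; exact/negP.
have lineaff : forall p0 q0 t, Fj (p0 + t *: q0) = Fj p0 + t * (Fj (p0 + q0) - Fj p0).
  move=> p0 q0.
  have := @line_affine R (fun t => Fj (p0 + t *: q0)) (K * `|q0|) ss w a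
    (lineF_lip p0 q0) uss aS wa.
  rewrite scale0r addr0 scale1r; apply => t u.
  rewrite -[RHS](H (u *: q0) (- (p0 + t *: q0))); apply: eq_bigr => s _.
  congr (_ * _); rewrite /bas /Fj; congr (f _ j 0).
  by apply/matrixP => i l; rewrite !mxE; ring.
pose G x := Fj x - Fj 0.
have homog : forall t x, G (t *: x) = t * G x.
  move=> t x; have := lineaff 0 x t; rewrite !add0r /G => ->; ring.
have G0 : G 0 = 0 by rewrite /G subrr.
have addv : forall x y, G (x + y) = G x + G y.
  move=> x y; have := lineaff x (y - x) (2^-1).
  have -> : x + (y - x) = y by apply/matrixP => i l; rewrite !mxE; ring.
  have -> : x + 2^-1 *: (y - x) = 2^-1 *: (x + y).
    by apply/matrixP => i l; rewrite !mxE; field.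
  move=> E; have := homog (2^-1) (x + y); rewrite /G E => E2.
  rewrite /G; lra.
pose av : vec := \col_i G (delta_mx i 0).
exists av, (Fj 0) => x.
have -> : f x j 0 = G x + Fj 0 by rewrite /G /Fj; ring.
congr (_ + _).
rewrite {1}(matrix_sum_delta x) (big_morph G addv G0) mxE.
apply: eq_bigr => i _; rewrite big_ord1 homog !mxE mulrC.
by rewrite (ord1 (0 : 'I_1)).
Qed.
End NoRel.
Arguments bas {R d}.
Arguments Fj {R d}.
Arguments is_derive_mx {R m n X s D}.
Arguments is_derive_mx_entry {R m n X s D}.
Arguments entry_le {R m n}.

Section Interp.
Variable R : realType.
Variable P : (R -> R) -> Prop.
Hypothesis Pext : forall f g, P f -> (forall s, f s = g s) -> P g.
Hypothesis P0 : P (fun _ => 0).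
Hypothesis Padd : forall f g, P f -> P g -> P (fun s => f s + g s).
Hypothesis Pscale : forall c f, P f -> P (fun s => c * f s).
Hypothesis noRel : forall (ss : seq R) (w : R -> R) a, uniq ss -> a \in ss -> w a != 0 ->
  exists b, P b /\ \sum_(s <- ss) w s * b s != 0.

Lemma Psum (I : Type) (rs : seq I) (F : I -> R -> R) :
  (forall r, P (F r)) -> P (fun s => \sum_(r <- rs) F r s).
Proof.
move=> HF; elim: rs => [|r rs IH].
  by apply: (Pext _ _ P0) => s; rewrite big_nil.
by apply: (Pext _ _ (Padd _ _ (HF r) IH)) => s; rewrite big_cons.
Qed.

Lemma sum_ind (rest : seq R) (b : R -> R) s : uniq rest -> s \in rest ->
  \sum_(r <- rest) b r * (s == r)%:R = b s.
Proof.
move=> u sr; rewrite (bigD1_seq s) //= eqxx mulr1 big1 ?addr0 // => r rs.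
by rewrite eq_sym (negbTE rs) mulr0.
Qed.

Lemma interp : forall ss : seq R, uniq ss -> forall val : R -> R,
  exists phi, P phi /\ forall s, s \in ss -> phi s = val s.
Proof.
elim=> [|a rest IH] /=.
  by move=> _ val; exists (fun _ => 0); split.
move=> /andP[arest urest] val.
have [e he] := @choice R (R -> R)
  (fun r phi => P phi /\ forall s, s \in rest -> phi s = (s == r)%:R)
  (fun r => IH urest (fun s => (s == r)%:R)).
have eP r : P (e r) by case: (he r).
have ev r s : s \in rest -> e r s = (s == r)%:R by case: (he r) => _; apply.
have [psi [Ppsi [psir psia]]] : exists psi, P psi /\
    (forall s, s \in rest -> psi s = 0) /\ psi a = 1.
  case: (pselect (exists psi, P psi /\
    (forall s, s \in rest -> psi s = 0) /\ psi a = 1)) => // Hn; exfalso.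
  pose w s := if s == a then -1 else e s a.
  have u1 : uniq (a :: rest) by rewrite /= arest urest.
  have w1 : w a != 0 by rewrite /w eqxx oppr_eq0 oner_eq0.
  have [b [Pb nz]] := @noRel (a :: rest) w a u1 (mem_head _ _) w1.
  have Ew : \sum_(s <- a :: rest) w s * b s =
      - b a + \sum_(r <- rest) e r a * b r.
    rewrite big_cons /w eqxx mulN1r; congr (_ + _).
    rewrite big_seq_cond [RHS]big_seq_cond; apply: eq_bigr => r /andP[rr _].
    by have -> : (r == a) = false by apply/negbTE; apply: contraNneq arest => <-.
  pose g s := b s - \sum_(r <- rest) b r * e r s.
  have Pg : P g.
    have Ps : P (fun s => \sum_(r <- rest) b r * e r s).
      by apply: (@Psum _ rest (fun r s => b r * e r s)) => r; exact: Pscale.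
    apply: (Pext _ _ (Padd _ _ Pb (Pscale (-1) _ Ps))).
    by move=> s; rewrite /g mulN1r.
  have gr : forall s, s \in rest -> g s = 0.
    move=> s sr; rewrite /g.
    rewrite (eq_big_seq (fun r => b r * (s == r)%:R)); last first.
      by move=> r rr; rewrite ev.
    by rewrite sum_ind // subrr.
  have ga : g a != 0.
    move: nz; rewrite Ew /g; apply: contra => /eqP E; apply/eqP.
    have -> : \sum_(r <- rest) e r a * b r = \sum_(r <- rest) b r * e r a.
      by apply: eq_bigr => r _; rewrite mulrC.
    lra.
  apply: Hn; exists (fun s => (g a)^-1 * g s); split; first exact: Pscale.
  split; first by move=> s sr; rewrite (gr s sr) mulr0.
  by rewrite mulVf.
exists (fun s => \sum_(r <- rest) val r * e r s +
  (val a - \sum_(r <- rest) val r * e r a) * psi s); split.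
  apply: Padd; last exact: Pscale.
  by apply: Psum => r; exact: Pscale.
move=> s; rewrite in_cons => /orP[/eqP ->|sr].
  by rewrite psia mulr1; ring.
rewrite psir // mulr0 addr0.
rewrite (eq_big_seq (fun r => val r * (s == r)%:R)); last first.
  by move=> r rr; rewrite ev.
by rewrite sum_ind.
Qed.
End Interp.

Section Flows.
Variables (R : realType) (d : nat).
Local Notation vec := 'cV[R]_d.
Variable F : set (vec -> vec).
Hypothesis aff : affine_invariant F.

Definition realizable (Phi : vec -> vec) :=
  exists s : seq ((vec -> vec) * R),
    (forall pr, pr \in s -> F pr.1 /\ 0 <= pr.2) /\ forall x, comp_flow s x (Phi x).

Lemma comp_flow_cat (s1 s2 : seq ((vec -> vec) * R)) x y z :
  comp_flow s1 x y -> comp_flow s2 y z -> comp_flow (s1 ++ s2) x z.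
Proof.
elim: s1 x => [|[g t] s1 IH] x /=; first by move=> ->.
by move=> [w [fw cw]] c2; exists w; split => //; exact: IH.
Qed.

Lemma real_comp Phi Psi : realizable Phi -> realizable Psi ->
  realizable (fun x => Psi (Phi x)).
Proof.
move=> [s1 [v1 c1]] [s2 [v2 c2]]; exists (s1 ++ s2); split.
  by move=> pr; rewrite mem_cat => /orP[]; [exact: v1|exact: v2].
by move=> x; apply: comp_flow_cat (c1 x) (c2 _).
Qed.

Lemma real_id : realizable id.
Proof. by exists [::]; split. Qed.

Lemma real_ext Phi Psi : realizable Phi -> (forall x, Phi x = Psi x) -> realizable Psi.
Proof. by move=> [s [v c]] E; exists s; split => // x; rewrite -E. Qed.
Arguments real_ext [Phi Psi].
Arguments real_comp [Phi Psi].

Definition shear (k m : 'I_d) (phi : R -> R) (x : vec) : vec :=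
  x + phi (x m 0) *: delta_mx k 0.

Lemma shear_entry k m phi x i : shear k m phi x i 0 = x i 0 + phi (x m 0) * (i == k)%:R.
Proof. by rewrite /shear !mxE andbT. Qed.

Lemma shear_m k m phi x : k != m -> shear k m phi x m 0 = x m 0.
Proof. by move=> km; rewrite shear_entry eq_sym (negbTE km) mulr0 addr0. Qed.

Lemma shear_inv k m phi x : k != m ->
  shear k m (fun s => - phi s) (shear k m phi x) = x.
Proof.
move=> km; rewrite {1}/shear shear_m // /shear scaleNr.
by rewrite addrK.
Qed.

Variables (f : vec -> vec) (j : 'I_d).
Hypothesis Ff : F f.

Definition Wm (k : 'I_d) (c : R) : 'M[R]_d := \matrix_(i < d, l < d) ((i == k)%:R * (l == j)%:R * c).
Definition Am (m : 'I_d) (q : vec) : 'M[R]_d := \matrix_(i < d, l < d) ((l == m)%:R * q i 0).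
Definition gfield k m c q p : vec -> vec := fun x => Wm k c *m f (Am m q *m x - p).

Lemma Am_mul m q x : Am m q *m x = x m 0 *: q.
Proof.
apply/matrixP => i l; rewrite (ord1 l) !mxE (bigD1 m) //= !mxE eqxx mul1r big1 ?addr0.
  by rewrite mulrC.
by move=> t tm; rewrite mxE (negbTE tm) mul0r mul0r.
Qed.

Lemma Wm_mul k c (y : vec) : Wm k c *m y = (c * y j 0) *: delta_mx k 0.
Proof.
apply/matrixP => i l; rewrite (ord1 l) !mxE (bigD1 j) //= !mxE eqxx mulr1 big1 ?addr0.
  by rewrite andbT; ring.
by move=> t tj; rewrite mxE (negbTE tj) mulr0 mul0r mul0r.
Qed.

Lemma gfieldE k m c q p x :
  gfield k m c q p x = (c * bas f j q p (x m 0)) *: delta_mx k 0.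
Proof. by rewrite /gfield Am_mul Wm_mul. Qed.

Lemma F_gfield k m c q p : F (gfield k m c q p).
Proof. exact: aff. Qed.

Lemma basic_flow k m c q p x : k != m ->
  is_flow (gfield k m c q p) 1 x (shear k m (fun s => c * bas f j q p s) x).
Proof.
move=> km; pose v := (c * bas f j q p (x m 0)) *: delta_mx k 0 : vec.
exists (fun s => x + s *: v); split; first by rewrite scale0r addr0.
split; first by rewrite scale1r.
move=> s.
have -> : gfield k m c q p (x + s *: v) = v.
  rewrite gfieldE; congr ((_ * bas _ _ _ _ _) *: _).
  by rewrite !mxE eq_sym (negbTE km) /= mulr0 mulr0 addr0.
apply: is_derive_mx => i l.
have := is_derive_lin (x i l) (v i l) s; apply: is_derive_ext => y.
by rewrite !mxE mulrC.
Qed.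

Definition inV (phi : R -> R) := exists Ls : seq (R * (vec * vec)),
  forall s, phi s = \sum_(l <- Ls) l.1 * bas f j l.2.1 l.2.2 s.

Lemma real_shear k m phi : k != m -> inV phi -> realizable (shear k m phi).
Proof.
move=> km [Ls hL].
suff : realizable (fun x => x +
    (\sum_(l <- Ls) l.1 * bas f j l.2.1 l.2.2 (x m 0)) *: delta_mx k 0).
  by move=> H; apply: (real_ext H) => x; rewrite /shear hL.
elim: Ls {hL} => [|l Ls IH].
  by apply: (real_ext real_id) => x; rewrite big_nil scale0r addr0.
have B : realizable (shear k m (fun s => l.1 * bas f j l.2.1 l.2.2 s)).
  exists [:: (gfield k m l.1 l.2.1 l.2.2, 1)]; split.
    by move=> pr; rewrite inE => /eqP ->; split; [exact: F_gfield|exact: ler01].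
  move=> x /=; exists (shear k m (fun s => l.1 * bas f j l.2.1 l.2.2 s) x).
  by split => //; exact: basic_flow.
apply: (real_ext (real_comp B IH)) => x /=.
rewrite shear_m // big_cons scalerDl /shear addrA //.
Qed.

Lemma inV0 : inV (fun _ => 0).
Proof. by exists [::] => s; rewrite big_nil. Qed.

Lemma inVadd phi psi : inV phi -> inV psi -> inV (fun s => phi s + psi s).
Proof.
move=> [L1 h1] [L2 h2]; exists (L1 ++ L2) => s.
by rewrite big_cat h1 h2.
Qed.

Lemma inVscale c phi : inV phi -> inV (fun s => c * phi s).
Proof.
move=> [L1 h1]; exists [seq (c * l.1, l.2) | l <- L1] => s.
by rewrite big_map h1 mulr_sumr; apply: eq_bigr => l _; rewrite mulrA.
Qed.

Lemma inVext phi psi : inV phi -> (forall s, phi s = psi s) -> inV psi.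
Proof. by move=> [L h] E; exists L => s; rewrite -E. Qed.

Arguments inVext [phi psi].
Arguments inVscale c [phi].
Arguments inVadd [phi psi].
Variable K : R.
Hypothesis fL : forall x y, `|f x - f y| <= K * `|x - y|.
Hypothesis naff : ~ component_affine f j.

Lemma interpV (ss : seq R) : uniq ss -> forall val : R -> R,
  exists phi, inV phi /\ forall s, s \in ss -> phi s = val s.
Proof.
apply: (@interp R inV inVext inV0 inVadd inVscale).
move=> ss' w a u aS wa.
have [q [p nz]] := @noRel R d f K j fL naff ss' w a u aS wa.
exists (bas f j q p); split => //.
by exists [:: (1, (q, p))] => s; rewrite big_seq1 mul1r.
Qed.

Lemma shear_interp k m (ss : seq R) : k != m -> uniq ss -> forall val : R -> R,
  exists phi, realizable (shear k m phi) /\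
    realizable (shear k m (fun s => - phi s)) /\ forall s, s \in ss -> phi s = val s.
Proof.
move=> km u val; have [phi [Vphi E]] := @interpV ss u val.
exists phi; split; first exact: real_shear.
split => //; apply: real_shear => //.
by apply: (inVext (inVscale (-1) Vphi)) => s; rewrite mulN1r.
Qed.
End Flows.
Arguments shear {R d}.
Arguments shear_entry {R d}.
Arguments shear_m {R d}.
Arguments shear_inv {R d}.

Section Phases.
Variables (R : realType) (d : nat).
Local Notation vec := 'cV[R]_d.
Variable F : set (vec -> vec).
Hypothesis aff : affine_invariant F.
Variables (f : vec -> vec) (j : 'I_d).
Hypothesis Ff : F f.
Variable K : R.
Hypothesis fL : forall x y, `|f x - f y| <= K * `|x - y|.
Hypothesis naff : ~ component_affine f j.
Variable i0 : 'I_d.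

Local Notation realizable := (@realizable R d F).
Local Notation shear_interp := (@shear_interp R d F aff f j Ff K fL naff).
Local Notation real_comp := (@real_comp R d F _ _).
Local Notation real_id := (@real_id R d F).

Lemma natdist (a b : nat) : a != b -> 1 <= `|a%:R - b%:R : R|.
Proof.
move=> ab; rewrite ler_normr; case: (ltngtP a b) => h.
- apply/orP; right; have : (a.+1%:R <= b%:R :> R) by rewrite ler_nat.
  rewrite -addn1 natrD; lra.
- apply/orP; left; have : (b.+1%:R <= a%:R :> R) by rewrite ler_nat.
  rewrite -addn1 natrD; lra.
- by rewrite h eqxx in ab.
Qed.

Lemma vec_neq (x y : vec) : x != y -> exists m, x m 0 != y m 0.
Proof.
move=> xy; case: (pselect (exists m, x m 0 != y m 0)) => // Hn.
exfalso; move/negP: xy; apply; apply/eqP/matrixP => m l; rewrite (ord1 l).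
by apply/eqP; apply/negPn/negP => H; apply: Hn; exists m.
Qed.

Lemma phase1_gen N (z : 'I_N -> vec) (ms : seq 'I_d) :
  exists Phi Phii, realizable Phi /\ realizable Phii /\ (forall x, Phii (Phi x) = x) /\
    (forall x l, l != i0 -> Phi x l 0 = x l 0) /\
    forall i i', (z i i0 0 != z i' i0 0 \/ exists m, m \in ms /\ z i m 0 != z i' m 0) ->
      Phi (z i) i0 0 != Phi (z i') i0 0.
Proof.
elim: ms => [|m ms IH].
  exists id, id; split; first exact: real_id.
  split; first exact: real_id.
  split => //; split => // i i' [] // [m []]; by rewrite in_nil.
have [Phi [Phii [rP [rPi [inv [coord sep]]]]]] := IH.
case: (eqVneq m i0) => [mi0|mi0].
  exists Phi, Phii; do 4!(split => //).
  move=> i i' [H|[m' [m'in H]]]; apply: sep; first by left.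
  move: m'in; rewrite in_cons => /orP[/eqP em|m'ms].
    by left; rewrite -mi0 -em.
  by right; exists m'.
pose y i := Phi (z i).
pose T := [seq y i m 0 | i <- enum 'I_N].
pose C := 1 + \sum_(p : 'I_N * 'I_N) `|y p.1 i0 0 - y p.2 i0 0|.
pose val v := C * (index v T)%:R.
have i0m : i0 != m by rewrite eq_sym.
have [phi [rS [rSi E]]] := shear_interp i0 m (undup T) i0m (undup_uniq T) val.
exists (fun x => shear i0 m phi (Phi x)), (fun x => Phii (shear i0 m (fun s => - phi s) x)).
split; first exact: real_comp rP rS.
split; first exact: real_comp rSi rPi.
split; first by move=> x; rewrite shear_inv.
split.
  by move=> x l l0; rewrite shear_entry (negbTE l0) mulr0 addr0 coord.
have ym : forall i, y i m 0 = z i m 0 by move=> i; rewrite /y coord // eq_sym.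
have Ty : forall i, y i m 0 \in undup T.
  by move=> i; rewrite mem_undup; apply: map_f; rewrite mem_enum.
have C1 : forall i i', `|y i i0 0 - y i' i0 0| <= C - 1.
  move=> i i'.
  have -> : C - 1 = \sum_(p : 'I_N * 'I_N) `|y p.1 i0 0 - y p.2 i0 0| by rewrite /C; ring.
  rewrite (bigD1 (i, i')) //= lerDl.
  by apply: sumr_ge0 => p _.
move=> i i' H; rewrite !shear_entry eqxx !mulr1.
case: (eqVneq (z i m 0) (z i' m 0)) => [zm|zm].
  rewrite /y in ym; rewrite !ym zm.
  have : Phi (z i) i0 0 != Phi (z i') i0 0.
    apply: sep; case: H => [H|[m' [m'in H]]]; first by left.
    move: m'in; rewrite in_cons => /orP[/eqP em|m'ms].
      by rewrite em zm eqxx in H.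
    by right; exists m'.
  by apply: contra => /eqP H1; apply/eqP; lra.
change (y i i0 0 + phi (y i m 0) != y i' i0 0 + phi (y i' m 0)).
rewrite (E _ (Ty i)) (E _ (Ty i')).
have ia : index (y i m 0) T != index (y i' m 0) T.
  apply: contra zm => /eqP Ei; rewrite -!ym.
  have Ti : forall i, y i m 0 \in T by move=> i2; rewrite -mem_undup.
  by rewrite -(nth_index 0 (Ti i)) -(nth_index 0 (Ti i')) Ei.
have h2 := @natdist _ _ ia.
have C0 : 1 <= C.
  by rewrite /C lerDl; apply: sumr_ge0.
have h4 : C * 1 <= C * `|(index (y i m 0) T)%:R - (index (y i' m 0) T)%:R|.
  by apply: ler_wpM2l; [lra|].
have h1 := C1 i i'.
apply/eqP => Eq.
have : C * ((index (y i m 0) T)%:R - (index (y i' m 0) T)%:R) = y i' i0 0 - y i i0 0.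
  rewrite /val /y in Eq; rewrite /y; lra.
move=> /(congr1 (fun t => `|t|)); rewrite normrM (@ger0_norm _ C); last lra.
move=> E2; rewrite distrC in h1; rewrite E2 in h4; lra.
Qed.

Lemma phase1 N (z : 'I_N -> vec) : injective z ->
  exists Phi Phii, realizable Phi /\ realizable Phii /\ (forall x, Phii (Phi x) = x) /\
    injective (fun i => Phi (z i) i0 0).
Proof.
move=> iz; have [Phi [Phii [rP [rPi [inv [_ sep]]]]]] := @phase1_gen N z (enum 'I_d).
exists Phi, Phii; do 3!(split => //).
move=> i i' /= E; case: (eqVneq i i') => // ii'; exfalso.
have zz : z i != z i' by apply/eqP => H; move/eqP: ii'; apply; apply: iz.
have [m zm] := @vec_neq _ _ zz.
have : Phi (z i) i0 0 != Phi (z i') i0 0.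
  apply: sep; case: (eqVneq m i0) => [mi0|mi0]; first by left; rewrite -mi0.
  by right; exists m; rewrite mem_enum.
by rewrite E eqxx.
Qed.


Lemma setcoord N (w : 'I_N -> vec) (k m : 'I_d) (v : 'I_N -> R) : k != m ->
  injective (fun i => w i m 0) ->
  exists Phi, realizable Phi /\ forall i, Phi (w i) = w i + (v i - w i k 0) *: delta_mx k 0.
Proof.
move=> km iw.
pose ss := [seq w i m 0 | i <- enum 'I_N].
have uss : uniq ss by rewrite map_inj_uniq ?enum_uniq.
pose val s := if [pick i | w i m 0 == s] is Some i then v i - w i k 0 else 0.
have [phi [rS [_ E]]] := shear_interp k m ss km uss val.
exists (shear k m phi); split => // i.
rewrite /shear E; last by apply: map_f; rewrite mem_enum.
rewrite /val; case: pickP => [i' /eqP H|H]; first by rewrite (iw _ _ H).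
by have := H i; rewrite eqxx.
Qed.

Lemma setall N (w z : 'I_N -> vec) : injective (fun i => w i i0 0) ->
  (forall i, w i i0 0 = z i i0 0) ->
  exists Phi, realizable Phi /\ forall i, Phi (w i) = z i.
Proof.
move=> iw wz.
suff gen : forall ms : seq 'I_d, exists Phi, realizable Phi /\ forall i,
    Phi (w i) i0 0 = w i i0 0 /\ forall m, m \in ms -> Phi (w i) m 0 = z i m 0.
  have [Phi [rP H]] := gen (enum 'I_d).
  exists Phi; split => // i; apply/matrixP => m l; rewrite (ord1 l).
  by case: (H i) => _; apply; rewrite mem_enum.
elim=> [|m ms [Phi [rP H]]].
  by exists id; split => [|i]; [exact: real_id|split].
case: (eqVneq m i0) => [mi0|mi0].
  exists Phi; split => // i; case: (H i) => H1 H2; split => // m'.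
  rewrite in_cons => /orP[/eqP ->|]; last exact: H2.
  by rewrite mi0 H1 wz.
pose w' i := Phi (w i).
have iw' : injective (fun i => w' i i0 0).
  by move=> i i' /= E; apply: iw; rewrite /= -!(proj1 (H _)).
have [Psi [rPs E]] := @setcoord N w' m i0 (fun i => z i m 0) mi0 iw'.
exists (fun x => Psi (Phi x)); split; first exact: real_comp rP rPs.
move=> i; have -> : Psi (Phi (w i)) = w' i + (z i m 0 - w' i m 0) *: delta_mx m 0 by exact: E.
case: (H i) => H1 H2.
rewrite !mxE eq_sym (negbTE mi0) /= mulr0 addr0; split => // m'.
rewrite !mxE andbT in_cons => /orP[/eqP ->|m'ms]; first by rewrite eqxx /= mulr1; ring.
case: (eqVneq m' m) => [->|m'm]; first by rewrite /= mulr1; ring.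
by rewrite /= mulr0 addr0 H2.
Qed.
End Phases.

Section Main.
Variables (R : realType) (d : nat).
Local Notation vec := 'cV[R]_d.
Variable F : set (vec -> vec).
Hypothesis aff : affine_invariant F.
Hypothesis d2 : (2 <= d)%N.

Lemma if_dir : (forall f, F f -> globally_lipschitz f) ->
  (exists f, F f /\ exists j : 'I_d, ~ component_affine f j) ->
  exact_universal_interpolation F.
Proof.
move=> Lip [f [Ff [j naff]]].
have [K fL] := Lip f Ff.
have d0 : (0 < d)%N by apply: leq_trans d2.
pose i0 : 'I_d := Ordinal d0.
pose i1 : 'I_d := Ordinal d2.
have i01 : i0 != i1 by [].
have i10 : i1 != i0 by [].
move=> N N0 xs ys ixs iys.
have [Phx [_ [rPx [_ [_ ix]]]]] := @phase1 R d F aff f j Ff K fL naff i0 N xs ixs.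
have [Phy [Phyi [_ [rPyi [invy iy]]]]] := @phase1 R d F aff f j Ff K fL naff i0 N ys iys.
pose w1 i := Phx (xs i).
pose z i := Phy (ys i).
have [PA [rA EA]] := @setcoord R d F aff f j Ff K fL naff N w1 i1 i0
  (fun i => (nat_of_ord i)%:R) i10 ix.
pose w2 i := PA (w1 i).
have w2i1 : forall i, w2 i i1 0 = (nat_of_ord i)%:R.
  by move=> i; rewrite /w2 EA !mxE eqxx /= mulr1; ring.
have w2i0 : forall i, w2 i i0 0 = w1 i i0 0.
  by move=> i; rewrite /w2 EA !mxE /= mulr0 addr0.
have iw2 : injective (fun i => w2 i i1 0).
  by move=> i i' /=; rewrite !w2i1 => /eqP; rewrite eqr_nat => /eqP /val_inj.
have [PB [rB EB]] := @setcoord R d F aff f j Ff K fL naff N w2 i0 i1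
  (fun i => z i i0 0) i01 iw2.
pose w3 i := PB (w2 i).
have w3i0 : forall i, w3 i i0 0 = z i i0 0.
  by move=> i; rewrite /w3 EB !mxE eqxx /= mulr1; ring.
have iw3 : injective (fun i => w3 i i0 0).
  by move=> i i' /=; rewrite !w3i0; exact: iy.
have [PC [rC EC]] := @setall R d F aff f j Ff K fL naff i0 N w3 z iw3 w3i0.
have r1 := @real_comp R d F _ _ rPx rA.
have r2 := @real_comp R d F _ _ r1 rB.
have r3 := @real_comp R d F _ _ r2 rC.
have rPhi := @real_comp R d F _ _ r3 rPyi.
have [s [vs cs]] := rPhi.
exists ((@gfield R d f j i0 i1 0 0 0, 1) :: s); split => //.
split.
  move=> pr; rewrite in_cons => /orP[/eqP ->|]; last exact: vs.
  by split; [exact: (@F_gfield R d F aff f j Ff)|exact: ler01].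
move=> i /=; exists (xs i); split.
  have := @basic_flow R d f j i0 i1 0 0 0 (xs i) i01.
  by rewrite /shear mul0r scale0r addr0.
have := cs (xs i).
have -> : Phyi (PC (PB (PA (Phx (xs i))))) = ys i.
  by have := EC i; rewrite /w3 /w2 /w1 => ->; rewrite /z invy.
done.
Qed.
End Main.

Section OnlyIf.
Variables (R : realType) (d : nat).
Local Notation vec := 'cV[R]_d.

Lemma sum_derive_gen (I : Type) (M : seq I) (Fn Fn' : I -> R -> R) x :
  (forall p, is_derive x (1:R) (Fn p) (Fn' p x)) ->
  is_derive x (1:R) (fun y => \sum_(p <- M) Fn p y) (\sum_(p <- M) Fn' p x).
Proof.
move=> D; elim: M => [|p M IH].
  rewrite big_nil; have := is_derive_cst (0:R) x (1:R); apply: is_derive_ext => y.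
  by rewrite big_nil.
rewrite big_cons; have := is_deriveD (D p) IH; apply: is_derive_ext => y.
by rewrite big_cons.
Qed.

Lemma prod_bound (g a b E : R) : a ^+ 2 <= E -> b ^+ 2 <= E -> g * (a * b) <= `|g| * E.
Proof.
move=> ha hb; have h1 := sqr_ge0 (a - b); have h2 := sqr_ge0 (a + b).
case: (lerP 0 g) => g0.
  rewrite ger0_norm //.
  have : a * b <= E by nra.
  by move=> hab; apply: ler_wpM2l.
rewrite ltr0_norm //.
have : - (a * b) <= E by nra.
move=> hab; nra.
Qed.

Lemma lin_unique (G : 'M[R]_d) (w : R -> vec) :
  (forall s, is_derive s (1:R) w (G *m w s)) -> w 0 = 0 ->
  forall t, 0 <= t -> w t = 0.
Proof.
move=> Dw w0 t t0.
pose E s := \sum_(i <- index_enum 'I_d) w s i 0 * w s i 0.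
pose E' s := \sum_(i <- index_enum 'I_d) (w s i 0 * (G *m w s) i 0 + w s i 0 * (G *m w s) i 0).
pose M := \sum_(i <- index_enum 'I_d) \sum_(l <- index_enum 'I_d) `|G i l|.
have dE : forall s, is_derive s (1:R) E (E' s).
  move=> s; apply: (@sum_derive_gen _ _ (fun i y => w y i 0 * w y i 0)
    (fun i y => w y i 0 * (G *m w y) i 0 + w y i 0 * (G *m w y) i 0)) => i.
  have Di := is_derive_mx_entry i 0 (Dw s).
  by have := is_deriveM Di Di; apply: is_derive_ext.
have E_ge0 : forall s, 0 <= E s.
  by move=> s; apply: sumr_ge0 => i _; rewrite -expr2 sqr_ge0.
have sqE : forall s i, w s i 0 ^+ 2 <= E s.
  move=> s i; rewrite /E (bigD1_seq i) ?mem_index_enum ?index_enum_uniq //=.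
  by rewrite expr2 lerDl; apply: sumr_ge0 => l _; rewrite -expr2 sqr_ge0.
have bound : forall s, E' s <= (M + M) * E s.
  move=> s.
  have bA : \sum_(i <- index_enum 'I_d) w s i 0 * (G *m w s) i 0 <= M * E s.
    rewrite /M mulr_suml; apply: ler_sum => i _; rewrite mulr_suml.
    have -> : w s i 0 * (G *m w s) i 0 =
        \sum_(l <- index_enum 'I_d) G i l * (w s i 0 * w s l 0).
      rewrite mxE mulr_sumr; apply: eq_bigr => l _; ring.
    by apply: ler_sum => l _; apply: prod_bound; apply: sqE.
  by rewrite /E' big_split /= mulrDl; apply: lerD; exact: bA.
pose c := - (M + M).
pose phi s := E s * expR (0 + c * s).
have dphi : forall s, is_derive s (1:R) phi (E s * (expR (0 + c * s) * c) + expR (0 + c * s) * E' s).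
  move=> s; have := is_deriveM (dE s) (comp_lin (is_derive_expR (0 + c * s))).
  by apply: is_derive_ext.
have phi0 : phi 0 = 0.
  rewrite /phi /E w0 big1 ?mul0r // => i _; by rewrite mxE mul0r.
have Et : E t = 0.
  case: (eqVneq t 0) => [->|tn0].
    by rewrite /E w0 big1 // => i _; rewrite mxE mul0r.
  have tp : 0 < t by rewrite lt_neqAle eq_sym tn0.
  have := @MVT R phi _ 0 t tp (fun x _ => dphi x).
  case.
    apply/continuous_subspaceT => r.
    apply/differentiable_continuous/derivable1_diffP.
    by case: (dphi r).
  move=> x _; rewrite phi0 subr0 => Ephi.
  have ex0 := expR_gt0 (0 + c * x).
  have : E x * (expR (0 + c * x) * c) + expR (0 + c * x) * E' x <= 0.
    have := bound x; rewrite /c => hb.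
    have -> : E x * (expR (0 + - (M + M) * x) * - (M + M)) + expR (0 + - (M + M) * x) * E' x
      = expR (0 + - (M + M) * x) * (E' x - (M + M) * E x) by ring.
    by rewrite pmulr_rle0 // subr_le0.
  move=> hle; have : phi t <= 0.
    by rewrite Ephi subr0; apply: mulr_le0_ge0 => //; exact: ltW.
  rewrite /phi pmulr_lle0 ?expR_gt0 // => Ele.
  by apply/eqP; rewrite eq_le Ele E_ge0.
apply/matrixP => i l; rewrite (ord1 l) mxE.
have := sqE t i; rewrite Et => h; apply/eqP; rewrite -sqrf_eq0 eq_le h sqr_ge0 //.
Qed.
End OnlyIf.

Section OnlyIf2.
Variables (R : realType) (d : nat).
Local Notation vec := 'cV[R]_d.

Lemma is_derive_extV (V W : normedModType R) (f g : V -> W) x v df :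
  (forall y, f y = g y) -> is_derive x v f df -> is_derive x v g df.
Proof. by move=> fg; have -> : g = f by apply/funext => y; rewrite fg. Qed.

Lemma affine_field (g : vec -> vec) : (forall j, component_affine g j) ->
  exists (G : 'M[R]_d) (c : vec), forall x, g x = G *m x + c.
Proof.
move=> H.
have H' : forall j : 'I_d, exists p : vec * R, forall x, g x j 0 = (p.1^T *m x) 0 0 + p.2.
  by move=> j; have [a [c h]] := H j; exists (a, c).
have [ac hac] := choice H'.
exists (\matrix_(j0 < d, i < d) (ac j0).1 i 0), (\col_(j0 < d) (ac j0).2) => x.
apply/matrixP => j0 l; rewrite (ord1 l) hac !mxE; congr (_ + _).
by apply: eq_bigr => i _; rewrite !mxE.
Qed.

Lemma flow_affine (G : 'M[R]_d) (c : vec) (g : vec -> vec) t a a' b b' e e' th :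
  (forall x, g x = G *m x + c) -> 0 <= t ->
  is_flow g t a a' -> is_flow g t b b' -> is_flow g t e e' ->
  e = (1 - th) *: a + th *: b -> e' = (1 - th) *: a' + th *: b'.
Proof.
move=> gE t0 [X [X0 [Xt DX]]] [Y [Y0 [Yt DY]]] [Z [Z0 [Zt DZ]]] Ee.
pose w s := Z s - ((1 - th) *: X s + th *: Y s).
have Dw : forall s, is_derive s (1:R) w (G *m w s).
  move=> s.
  have := is_deriveB (DZ s) (is_deriveD (is_deriveZ (1 - th) (DX s)) (is_deriveZ th (DY s))).
  have -> : g (Z s) - ((1 - th) *: g (X s) + th *: g (Y s)) = G *m w s.
    rewrite !gE /w mulmxBr mulmxDr -!scalemxAr.
    move: (G *m Z s) (G *m X s) (G *m Y s) => A1 A2 A3.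
    apply/matrixP => i l; rewrite !mxE; ring.
  by apply: is_derive_extV.
have w0 : w 0 = 0 by rewrite /w X0 Y0 Z0 Ee subrr.
have := @lin_unique R d G w Dw w0 t t0; rewrite /w Xt Yt Zt => /eqP; rewrite subr_eq0 => /eqP.
done.
Qed.

Lemma comp_flow_affine (s : seq ((vec -> vec) * R)) a a' b b' e e' th :
  (forall p, p \in s -> (exists (G : 'M[R]_d) (c : vec), forall x, p.1 x = G *m x + c) /\ 0 <= p.2) ->
  comp_flow s a a' -> comp_flow s b b' -> comp_flow s e e' ->
  e = (1 - th) *: a + th *: b -> e' = (1 - th) *: a' + th *: b'.
Proof.
elim: s a b e => [|[g t] s IH] a b e /= H.
  by move=> -> -> ->.
move=> [a1 [fa ca]] [b1 [fb cb]] [e1 [fe ce]] Ee.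
have [[G [c gE]] t0] := H (g, t) (mem_head _ _).
apply: (IH a1 b1 e1) => //.
  by move=> p ps; apply: H; rewrite in_cons ps orbT.
exact: (@flow_affine G c g t a a1 b b1 e e1 th gE t0 fa fb fe).
Qed.

Lemma onlyif_dir (F : set (vec -> vec)) : (2 <= d)%N ->
  exact_universal_interpolation F -> exists f, F f /\ exists j, ~ component_affine f j.
Proof.
move=> d2 EUI.
case: (pselect (exists f, F f /\ exists j, ~ component_affine f j)) => // Hn; exfalso.
have allaff : forall f, F f -> forall j, component_affine f j.
  move=> f Ff j; case: (pselect (component_affine f j)) => // nj; exfalso.
  by apply: Hn; exists f; split => //; exists j.
have d0 : (0 < d)%N by apply: leq_trans d2.
pose i0 : 'I_d := Ordinal d0.
pose i1 : 'I_d := Ordinal d2.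
pose e0 : vec := delta_mx i0 0.
pose e1 : vec := delta_mx i1 0.
have e00 : e0 i0 0 = 1 by rewrite !mxE.
have e01 : e0 i1 0 = 0 by rewrite !mxE.
have e10 : e1 i0 0 = 0 by rewrite !mxE.
have e11 : e1 i1 0 = 1 by rewrite !mxE.
have n0 : (0 : vec) != e0.
  by apply/eqP => /(congr1 (fun v : vec => v i0 0)); rewrite e00 mxE => /eqP; rewrite eq_sym oner_eq0.
have n1 : (0 : vec) != e1.
  by apply/eqP => /(congr1 (fun v : vec => v i1 0)); rewrite e11 mxE => /eqP; rewrite eq_sym oner_eq0.
have n01 : e0 != e1.
  by apply/eqP => /(congr1 (fun v : vec => v i0 0)); rewrite e00 e10 => /eqP; rewrite oner_eq0.
pose xs (i : 'I_3) : vec := (nat_of_ord i)%:R *: e0.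
pose ys (i : 'I_3) : vec := if nat_of_ord i == 1%N then e0 else if nat_of_ord i == 2%N then e1 else 0.
have ixs : injective xs.
  move=> i i' /(congr1 (fun v : vec => v i0 0)); rewrite /xs !mxE !eqxx /= !mulr1.
  by move=> /eqP; rewrite eqr_nat => /eqP; apply: val_inj.
have iys : injective ys.
  move=> i i' E; apply/val_inj; move: i i' E => [[|[|[|n]]] Hi] [[|[|[|n']]] Hi'] //=;
  rewrite /ys /= => /eqP; rewrite ?(negbTE n0) ?(negbTE n1) ?(negbTE n01) //;
  rewrite eq_sym ?(negbTE n0) ?(negbTE n1) ?(negbTE n01) //.
have [s [_ [vs cs]]] := EUI 3%N isT xs ys ixs iys.
pose o0 : 'I_3 := @Ordinal 3 0 isT.
pose o1 : 'I_3 := @Ordinal 3 1 isT.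
pose o2 : 'I_3 := @Ordinal 3 2 isT.
have H : ys o2 = (1 - 2) *: ys o0 + 2 *: ys o1.
  apply: (@comp_flow_affine s (xs o0) _ (xs o1) _ (xs o2) _ 2) => //.
    move=> p ps; have [Fp p0] := vs p ps; split => //.
    exact: affine_field (allaff _ Fp).
  rewrite /xs /=; apply/matrixP => i l; rewrite !mxE; ring.
move: H; rewrite /ys /= => /(congr1 (fun v : vec => v i1 0)).
have i10 : (i1 == i0) = false by [].
rewrite !mxE !eqxx i10 /= mulr0 mulr0 addr0 => /eqP.
by rewrite oner_eq0.
Qed.
End OnlyIf2.


Theorem theorem2p6 (R : realType) (d : nat) (F : set ('cV[R]_d -> 'cV[R]_d)) :
  (2 <= d)%N ->
  (forall f, F f -> globally_lipschitz f) ->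
  affine_invariant F ->
  (exact_universal_interpolation F <->
   exists f, F f /\ exists j : 'I_d, ~ component_affine f j).
Proof.
move=> d2 Lip aff; split.
  exact: (@onlyif_dir R d F d2).
exact: (@if_dir R d F aff d2 Lip).
Qed.
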